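(* Let $\mathfrak{A}$ be a $(\circ,\wedge,\mathsf{A})$-algebra and $\theta$ a representation of $\mathfrak{A}$ by partial functions. If $\theta$ is join complete, then $\theta$ is meet complete.
   Context: A $(\circ,\wedge,\mathsf{A})$-algebra is a set with two binary operations $\circ,\wedge$ and one unary operation $\mathsf{A}$. An algebra of partial functions of this signature is a set of partial functions, with base $X$ the union of all their domains and ranges, closed under: composition $f\circ g=\{(x,z)\mid \exists y\,(x,y)\in f,(y,z)\in g\}$; intersection; antidomain $\mathsf{A}(f)=\{(x,x)\mid x\in X, x\notin\mathrm{dom}(f)\}$. A representation by partial functions is an isomorphism onto such an algebra. The order on $\mathfrak{A}$ is $a\le b\iff a\wedge b=a$. A representation $\theta$ is meet complete if for every nonempty $S\subseteq\mathfrak{A}$ such that $\bigwedge S$ exists, $\theta(\bigwedge S)=\bigcap\theta[S]$; it is join complete if for every $S\subseteq\mathfrak{A}$ such that $\bigvee S$ exists, $\theta(\bigvee S)=\bigcup\theta[S]$. *)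

(* Defs.v *)
Definition brel (X : Type) := X -> X -> Prop.

Definition functional {X : Type} (f : brel X) : Prop :=
  forall x y z, f x y -> f x z -> y = z.

Definition rcomp {X : Type} (f g : brel X) : brel X :=
  fun x z => exists y, f x y /\ g y z.

Definition rinter {X : Type} (f g : brel X) : brel X :=
  fun x y => f x y /\ g x y.

(* Antidomain relative to the base X (X is the whole base type). *)
Definition rantidom {X : Type} (f : brel X) : brel X :=
  fun x y => x = y /\ ~ (exists z, f x z).

Definition releq {X : Type} (f g : brel X) : Prop :=
  forall x y, f x y <-> g x y.

Definition is_pfun_representation {car X : Type}
    (comp meet : car -> car -> car) (antidom : car -> car)
    (theta : car -> brel X) : Prop :=
  (forall a, functional (theta a)) /\
  (forall a b, releq (theta a) (theta b) -> a = b) /\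
  (forall a b, releq (theta (comp a b)) (rcomp (theta a) (theta b))) /\
  (forall a b, releq (theta (meet a b)) (rinter (theta a) (theta b))) /\
  (forall a, releq (theta (antidom a)) (rantidom (theta a))) /\
  (forall x : X, exists a, (exists y, theta a x y) \/ (exists y, theta a y x)).

Definition ale {car : Type} (meet : car -> car -> car) (a b : car) : Prop :=
  meet a b = a.

Definition is_inf {car : Type} (meet : car -> car -> car)
    (S : car -> Prop) (m : car) : Prop :=
  (forall s, S s -> ale meet m s) /\
  (forall l, (forall s, S s -> ale meet l s) -> ale meet l m).

Definition is_sup {car : Type} (meet : car -> car -> car)
    (S : car -> Prop) (m : car) : Prop :=
  (forall s, S s -> ale meet s m) /\
  (forall u, (forall s, S s -> ale meet s u) -> ale meet m u).

Definition meet_complete {car X : Type} (meet : car -> car -> car)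
    (theta : car -> brel X) : Prop :=
  forall (S : car -> Prop) (m : car), (exists s, S s) -> is_inf meet S m ->
    forall x y, theta m x y <-> (forall s, S s -> theta s x y).

Definition join_complete {car X : Type} (meet : car -> car -> car)
    (theta : car -> brel X) : Prop :=
  forall (S : car -> Prop) (m : car), is_sup meet S m ->
    forall x y, theta m x y <-> (exists s, S s /\ theta s x y).

(* Main.v *)
Require Import Defs.
From Stdlib Require Import Classical.

Theorem mainTheorem3 (car : Type) (comp meet : car -> car -> car)
    (antidom : car -> car) (X : Type) (theta : car -> brel X)
    (Hrep : is_pfun_representation comp meet antidom theta) :
  join_complete meet theta -> meet_complete meet theta.
Proof.
  destruct Hrep as [Hf [Hinj [Hc [Hm [Ha _]]]]]. unfold releq in *.
  assert (Hle1 : forall a b, ale meet a b -> forall x y, theta a x y -> theta b x y).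
  { intros a b Hab x y H. unfold ale in Hab. rewrite <- Hab in H.
    apply Hm in H. apply H. }
  assert (Hle2 : forall a b, (forall x y, theta a x y -> theta b x y) -> ale meet a b).
  { intros a b H. unfold ale. apply Hinj. intros x y. rewrite Hm. unfold rinter.
    split; [tauto|]. intro; split; auto. }
  assert (HAc : forall a b x y, theta (comp (antidom a) b) x y <->
                 (~ exists z, theta a x z) /\ theta b x y).
  { intros a b x y. rewrite Hc. unfold rcomp. split.
    - intros [z [H1 H2]]. apply Ha in H1. destruct H1 as [-> H1]. auto.
    - intros [H1 H2]. exists x. split; auto. apply Ha. split; auto. }
  intros HJ S m [s0 Hs0] [Hlb Hglb] x y. split.
  { intros H s Hs. exact (Hle1 _ _ (Hlb s Hs) _ _ H). }
  intros Hall.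
  set (U := fun t => t = m \/ exists s, S s /\ t = comp (antidom (meet s0 s)) s0).
  assert (Hsup : is_sup meet U s0).
  { split.
    - intros t [-> | [s [Hs ->]]].
      + apply Hlb; auto.
      + apply Hle2. intros p q H. apply HAc in H. apply H.
    - intros u Hu. apply Hle2. intros p q Hpq.
      destruct (classic (exists z, theta (meet s0 u) p z)) as [[z Hz]|Hnz].
      + apply Hm in Hz. destruct Hz as [Hz1 Hz2].
        rewrite (Hf _ _ _ _ Hpq Hz1). exact Hz2.
      + set (w := comp (antidom (meet s0 u)) s0).
        assert (Hwm : ale meet w m).
        { apply Hglb. intros s Hs. apply Hle2. intros p' q' H'.
          apply HAc in H'. destruct H' as [Hnd H0].
          destruct (classic (exists z, theta (meet s0 s) p' z)) as [[z Hz]|Hnz'].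
          - apply Hm in Hz. destruct Hz as [Hz1 Hz2].
            rewrite (Hf _ _ _ _ H0 Hz1). exact Hz2.
          - exfalso. apply Hnd. exists q'. apply Hm. split; auto.
            apply (Hle1 (comp (antidom (meet s0 s)) s0)).
            + apply Hu. right. eauto.
            + apply HAc. auto. }
        apply (Hle1 m). { apply Hu. left; reflexivity. }
        apply (Hle1 w); auto. apply HAc. auto. }
  destruct (proj1 (HJ U s0 Hsup x y) (Hall s0 Hs0)) as [t [[-> | [s [Hs ->]]] Ht]].
  - exact Ht.
  - exfalso. apply HAc in Ht. destruct Ht as [Hn _]. apply Hn.
    exists y. apply Hm. split; apply Hall; auto.
Qed.
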